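(* Let $0<p<1$ be a constant. For positive integers $n,m$, let $G_{n,m}$ be the random bipartite graph on the vertex set $V_1\cup V_2$ with $V_1\cap V_2=\emptyset$, $|V_1|=n$, $|V_2|=m$, in which each pair $\{i,k\}$ with $i\in V_1$, $k\in V_2$ is an edge independently with probability $p$, and there are no other edges. Suppose $n\in\Theta(m)$, i.e. there are constants $a,b>0$ with $n\le a m$ and $m\le b n$ for all sufficiently large $n,m$. Then $\Pr(G_{n,m}\text{ is a UNN})\to 1$ as $n+m\to\infty$.
   Context: All graphs are finite, simple and undirected. For a vertex $v$ of a graph, $\mathrm{nb}(v)$ denotes the set of its neighbors; a vertex is not its own neighbor. A graph $G=(V,E)$ is a unique-neighborhood network (UNN) if distinct vertices have distinct neighborhoods, i.e. $\mathrm{nb}(u)\neq\mathrm{nb}(v)$ (equivalently $\mathrm{nb}(u)\triangle\mathrm{nb}(v)\neq\emptyset$) for all distinct $u,v\in V$. *)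

(* Defs.v *)
From HB Require Import structures.
From mathcomp Require Import all_boot all_order all_algebra.
From mathcomp Require Import reals.
Set Implicit Arguments. Unset Strict Implicit. Unset Printing Implicit Defensive.
Import Order.TTheory GRing.Theory Num.Theory.
Local Open Scope ring_scope.

Definition nb (T : finType) (adj : rel T) (v : T) : {set T} := [set u | adj v u].

Definition UNN (T : finType) (adj : rel T) : bool :=
  [forall u : T, forall v : T, (u != v) ==> (nb adj u != nb adj v)].

(* Bipartite graph on V1 = 'I_n (left, inl) and V2 = 'I_m (right, inr),
   whose edges are exactly the pairs {inl i, inr k} with (i,k) \in E. *)
Definition bip_adj (n m : nat) (E : {set 'I_n * 'I_m}) : rel ('I_n + 'I_m) :=
  fun u v => match u, v with
             | inl i, inr k => (i, k) \in E
             | inr k, inl i => (i, k) \in E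
             | _, _ => false
             end.

(* Probability, in G_{n,m} with edge probability p, that the random edge
   set satisfies the predicate P: each of the n*m possible edges is present
   independently with probability p. *)
Definition prob_Gnm (R : realType) (p : R) (n m : nat)
    (P : {set 'I_n * 'I_m} -> bool) : R :=
  \sum_(E : {set 'I_n * 'I_m} | P E) p ^+ #|E| * (1 - p) ^+ (n * m - #|E|)%N.

Definition prob_UNN (R : realType) (p : R) (n m : nat) : R :=
  prob_Gnm p (fun E : {set 'I_n * 'I_m} => UNN (bip_adj E)).

(* Main.v *)
Require Import Defs.
From HB Require Import structures.
From mathcomp Require Import all_boot all_order all_algebra.
From mathcomp Require Import reals.
From mathcomp Require Import lra zify ring.
Import Order.TTheory GRing.Theory Num.Theory.
Set Implicit Arguments. Unset Strict Implicit. Unset Printing Implicit Defensive.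
Local Open Scope ring_scope.
Lemma sum_set_prod (R : comPzRingType) (T : finType) (g : T -> bool -> R) :
  \sum_(E : {set T}) \prod_(x : T) g x (x \in E) = \prod_(x : T) (g x true + g x false).
Proof.
under eq_bigr do rewrite -big_bool /=.
rewrite bigA_distr_bigA /=.
rewrite (reindex (fun f : {ffun T -> bool} => [set x | f x])) /=.
  by apply: eq_bigr => f _; apply: eq_bigr => x _; rewrite inE.
apply: onW_bij; exists (fun E : {set T} => [ffun x => x \in E]).
  by move=> f; apply/ffunP => x; rewrite ffunE inE.
by move=> E; apply/setP => x; rewrite inE ffunE.
Qed.

Definition wt (R : realType) (p : R) (b : bool) : R := if b then p else 1 - p.
Definition W (R : realType) (p : R) (T : finType) (E : {set T}) : R :=
  \prod_(x : T) wt p (x \in E).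
Definition Ex (R : realType) (p : R) (T : finType) (F : {set T} -> R) : R :=
  \sum_(E : {set T}) W p E * F E.

Lemma W_eq (R : realType) (p : R) (T : finType) (E : {set T}) :
  p ^+ #|E| * (1 - p) ^+ (#|T| - #|E|) = W p E.
Proof.
rewrite /W (bigID (mem E)) /=; congr (_ * _).
  by rewrite (eq_bigr (fun=> p)) ?prodr_const // => x ->.
rewrite (eq_bigr (fun=> 1 - p)); last by move=> x hx; rewrite (negbTE hx).
rewrite prodr_const; congr (_ ^+ _).
by rewrite -(cardC (mem E)) addKn.
Qed.

Lemma Ex_prod (R : realType) (p : R) (T : finType) (h : T -> bool -> R) :
  Ex p (fun E => \prod_(x : T) h x (x \in E)) = \prod_(x : T) (p * h x true + (1 - p) * h x false).
Proof.
rewrite /Ex -(sum_set_prod (fun x b => wt p b * h x b)).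
by apply: eq_bigr => E _; rewrite /W -big_split.
Qed.

Lemma Ex1 (R : realType) (p : R) (T : finType) : Ex p (fun _ : {set T} => 1) = 1.
Proof.
have := Ex_prod p (fun (x : T) (b : bool) => 1 : R).
rewrite big1_eq => ->; apply: big1 => x _; rewrite !mulr1; ring.
Qed.

Lemma W_ge0 (R : realType) (p : R) (T : finType) (E : {set T}) : 0 <= p -> p <= 1 -> 0 <= W p E.
Proof.
move=> p0 p1; apply: prodr_ge0 => x _; rewrite /wt; case: (x \in E) => //.
by rewrite subr_ge0.
Qed.

Lemma Ex_le (R : realType) (p : R) (T : finType) (F G : {set T} -> R) : 0 <= p -> p <= 1 ->
  (forall E, F E <= G E) -> Ex p F <= Ex p G.
Proof.
move=> p0 p1 FG; apply: ler_sum => E _; apply: ler_wpM2l; [exact: W_ge0|exact: FG].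
Qed.

Lemma Ex_sum (R : realType) (p : R) (T : finType) (I : finType) (F : I -> {set T} -> R) :
  Ex p (fun E => \sum_(i : I) F i E) = \sum_(i : I) Ex p (F i).
Proof.
rewrite /Ex; under eq_bigr do rewrite mulr_sumr.
by rewrite exchange_big.
Qed.

Lemma Ex_add (R : realType) (p : R) (T : finType) (F G : {set T} -> R) :
  Ex p (fun E => F E + G E) = Ex p F + Ex p G.
Proof.
rewrite /Ex -big_split /=; apply: eq_bigr => E _; by rewrite mulrDr.
Qed.

Lemma Ex_ext (R : realType) (p : R) (T : finType) (F G : {set T} -> R) :
  (forall E, F E = G E) -> Ex p F = Ex p G.
Proof. by move=> FG; apply: eq_bigr => E _; rewrite FG. Qed.

Lemma prod_row1 (R : comPzRingType) (I J : finType) (u : I) (F : I -> J -> R) :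
  (forall i k, i != u -> F i k = 1) -> \prod_(x : I * J) F x.1 x.2 = \prod_(k : J) F u k.
Proof.
move=> H; rewrite -(pair_bigA _ F) /= (bigD1 u) //= [X in _ * X]big1 ?mulr1 // => i hi.
by apply: big1 => k _; exact: H.
Qed.

Lemma prod_row2 (R : comPzRingType) (I J : finType) (u u' : I) (F : I -> J -> R) :
  u != u' -> (forall i k, i != u -> i != u' -> F i k = 1) ->
  \prod_(x : I * J) F x.1 x.2 = \prod_(k : J) F u k * \prod_(k : J) F u' k.
Proof.
move=> uu H; rewrite -(pair_bigA _ F) /= (bigD1 u) //= (bigD1 u') /=; last by rewrite eq_sym uu.
rewrite [X in _ * (_ * X)]big1 ?mulr1 ?mulrA // => i /andP [hi hi'].
by apply: big1 => k _; exact: H.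
Qed.

Lemma prod_bool (R : comPzRingType) (T : finType) (P : pred T) :
  ([forall x, P x])%:R = \prod_(x : T) (P x)%:R :> R.
Proof.
case E: [forall x, P x].
  by move/forallP: E => H; rewrite big1 // => x _; rewrite H.
by move/negbT/forallPn: E => [x hx]; rewrite (bigD1 x) //= (negbTE hx) mul0r.
Qed.

Lemma iso_Ex (R : realType) (p : R) (I J : finType) (u : I) :
  Ex p (fun E : {set I * J} => ([forall k, (u, k) \notin E])%:R) = (1 - p) ^+ #|J|.
Proof.
rewrite (@Ex_ext _ p _ _ (fun E => \prod_(x : I * J)
   (fun x b => if x.1 == u then (~~ b)%:R else 1 : R) x (x \in E))).
  rewrite (Ex_prod p (fun (x : I * J) (b : bool) => if x.1 == u then (~~ b)%:R else 1 : R)).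
  rewrite (eq_bigr (fun x => (fun i (k : J) => if i == u then 1 - p else 1) x.1 x.2)).
    rewrite (@prod_row1 _ I J u (fun i (k : J) => if i == u then 1 - p else 1)) ?eqxx ?prodr_const //.
    by move=> i k /negbTE ->.
  by move=> [i k] _ /=; case: (i == u) => /=; rewrite ?mulr0 ?mulr1 ?add0r //; ring.
move=> E; rewrite prod_bool.
rewrite (eq_bigr (fun x => (fun i k => if i == u then (~~ ((i, k) \in E))%:R else 1 : R) x.1 x.2)).
  by rewrite (@prod_row1 _ I J u (fun i k => if i == u then (~~ ((i, k) \in E))%:R else 1 : R)) ?eqxx // => i k /negbTE ->.
by move=> [i k].
Qed.

Lemma row_Ex (R : realType) (p : R) (I J : finType) (u u' : I) : u != u' ->
  Ex p (fun E : {set I * J} => ([forall k, ((u, k) \in E) == ((u', k) \in E)])%:R)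
  = (p ^+ 2 + (1 - p) ^+ 2) ^+ #|J|.
Proof.
move=> uu; have uu' : u' != u by rewrite eq_sym.
pose h (β : {ffun J -> bool}) (x : I * J) (c : bool) : R :=
  (if x.1 == u then (c == β x.2)%:R else 1) * (if x.1 == u' then (c == β x.2)%:R else 1).
rewrite (@Ex_ext _ p _ _ (fun E => \sum_(β : {ffun J -> bool}) \prod_(x : I * J) h β x (x \in E))).
  rewrite Ex_sum.
  rewrite (eq_bigr (fun β : {ffun J -> bool} => \prod_(k : J) wt p (β k) ^+ 2)).
    rewrite -(bigA_distr_bigA (fun (k : J) (b : bool) => wt p b ^+ 2)) /=.
    rewrite (eq_bigr (fun => p ^+ 2 + (1 - p) ^+ 2)) ?prodr_const //.
    by move=> k _; rewrite big_bool.
  move=> β _; rewrite (Ex_prod p (h β)).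
  rewrite (eq_bigr (fun x => (fun i k => if i == u then wt p (β k) else if i == u' then wt p (β k) else 1) x.1 x.2)).
    rewrite (@prod_row2 _ I J u u' (fun i k => if i == u then wt p (β k) else if i == u' then wt p (β k) else 1)) //=.
      rewrite eqxx (negbTE uu') ?eqxx.
      by rewrite -big_split /=; apply: eq_bigr => k _; rewrite expr2.
    by move=> i k /negbTE -> /negbTE ->.
  move=> [i k] _; rewrite /h /=.
  case: (boolP (i == u)) => [/eqP ->|ne].
    by rewrite (negbTE uu) /wt; case: (β k); rewrite /= ?mulr1 ?mulr0 ?addr0 ?add0r.
  case: (boolP (i == u')) => [_|ne'].
    by rewrite /wt; case: (β k); rewrite /= ?mul1r ?mulr1 ?mulr0 ?addr0 ?add0r.
  by rewrite !mulr1; ring.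
move=> E; rewrite prod_bool.
rewrite (eq_bigr (fun k => \sum_(b : bool) (((u, k) \in E) == b)%:R * (((u', k) \in E) == b)%:R)); last first.
  by move=> k _; rewrite big_bool; case: ((u, k) \in E); case: ((u', k) \in E); rewrite /= ?mulr0 ?mulr1 ?addr0 ?add0r.
rewrite bigA_distr_bigA /=; apply: eq_bigr => β _.
rewrite (eq_bigr (fun x => (fun i k => h β (i, k) ((i, k) \in E)) x.1 x.2)); last by move=> [i k].
rewrite (@prod_row2 _ I J u u' (fun i k => h β (i, k) ((i, k) \in E))) //.
  rewrite -big_split /=; apply: eq_bigr => k _; rewrite /h /= eqxx (negbTE uu) (negbTE uu') eqxx.
  by rewrite mulr1 mul1r.
by move=> i k hi hi'; rewrite /h /= (negbTE hi) (negbTE hi') mulr1.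
Qed.

Lemma Ex_tr (R : realType) (p : R) (I J : finType) (F : {set I * J} -> R) :
  Ex p F = Ex p (fun E' : {set J * I} => F [set x : I * J | (x.2, x.1) \in E']).
Proof.
rewrite /Ex (reindex (fun E' : {set J * I} => [set x : I * J | (x.2, x.1) \in E'])) /=.
  apply: eq_bigr => E' _; congr (_ * _).
  rewrite /W (reindex (fun y : J * I => (y.2, y.1))) /=.
    by apply: eq_bigr => -[a b] _; rewrite inE.
  by apply: onW_bij; exists (fun x : I * J => (x.2, x.1)) => -[a b].
apply: onW_bij; exists (fun E : {set I * J} => [set y : J * I | (y.2, y.1) \in E]).
  by move=> E'; apply/setP => -[a b]; rewrite !inE.
by move=> E; apply/setP => -[a b]; rewrite !inE.
Qed.

Lemma col_Ex (R : realType) (p : R) (I J : finType) (k k' : J) : k != k' ->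
  Ex p (fun E : {set I * J} => ([forall i, ((i, k) \in E) == ((i, k') \in E)])%:R)
  = (p ^+ 2 + (1 - p) ^+ 2) ^+ #|I|.
Proof.
move=> kk; rewrite Ex_tr -(@row_Ex _ p J I k k' kk).
apply: Ex_ext => E'; by under eq_forallb do rewrite !inE.
Qed.

Lemma notUNN_bad (n m : nat) (E : {set 'I_n * 'I_m}) : ~~ UNN (bip_adj E) ->
  [|| [exists u : 'I_n, exists u' : 'I_n, (u != u') && [forall k, ((u, k) \in E) == ((u', k) \in E)]],
      [exists k : 'I_m, exists k' : 'I_m, (k != k') && [forall i, ((i, k) \in E) == ((i, k') \in E)]]
    | [exists u : 'I_n, [forall k, (u, k) \notin E]]].
Proof.
rewrite /UNN => /forallPn [x /forallPn [y]].
rewrite negb_imply negbK => /andP [xy /eqP nbe].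
have H z : bip_adj E x z = bip_adj E y z.
  by move/setP: nbe => /(_ z); rewrite !inE.
clear nbe; case: x y xy H => [i|k] [i'|k'] xy H.
- apply/orP; left; apply/existsP; exists i; apply/existsP; exists i'.
  apply/andP; split; first by apply: contraNneq xy => ->.
  by apply/forallP => k; apply/eqP; exact: (H (inr k)).
- apply/orP; right; apply/orP; right; apply/existsP; exists i; apply/forallP => k0.
  by have := H (inr k0); rewrite /= => ->.
- apply/orP; right; apply/orP; right; apply/existsP; exists i'; apply/forallP => k0.
  by have := H (inr k0); rewrite /= => <-.
- apply/orP; right; apply/orP; left; apply/existsP; exists k; apply/existsP; exists k'.
  apply/andP; split; first by apply: contraNneq xy => ->.
  by apply/forallP => i; apply/eqP; exact: (H (inl i)).
Qed.

Lemma exists_le (R : realType) (T : finType) (P : pred T) :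
  ([exists x, P x])%:R <= \sum_(x : T) (P x)%:R :> R.
Proof.
case: existsP => [[x hx]|_]; last by apply: sumr_ge0 => x _; exact: ler0n.
rewrite (bigD1 x) //= hx lerDl; apply: sumr_ge0 => y _; exact: ler0n.
Qed.

Lemma orb_le (R : realType) (a b : bool) : ((a || b))%:R <= a%:R + b%:R :> R.
Proof. by case: a; case: b; rewrite /= ?addr0 ?add0r ?lerDl ?ler0n. Qed.

Lemma prob_UNN_Ex (R : realType) (p : R) (n m : nat) :
  prob_UNN p n m = Ex p (fun E : {set 'I_n * 'I_m} => (UNN (bip_adj E))%:R).
Proof.
have cT : #|{: 'I_n * 'I_m}| = (n * m)%N by rewrite card_prod !card_ord.
rewrite /prob_UNN /prob_Gnm big_mkcond /Ex; apply: eq_bigr => E _.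
rewrite -cT W_eq; case: (UNN _); by rewrite ?mulr1 ?mulr0.
Qed.

Lemma bad_bound (R : realType) (p : R) (n m : nat) : 0 <= p -> p <= 1 ->
  1 - prob_UNN p n m <= (n * n)%:R * (p ^+ 2 + (1 - p) ^+ 2) ^+ m
     + (m * m)%:R * (p ^+ 2 + (1 - p) ^+ 2) ^+ n + n%:R * (1 - p) ^+ m.
Proof.
move=> p0 p1.
set q := p ^+ 2 + (1 - p) ^+ 2.
have q0 : 0 <= q by rewrite /q addr_ge0 // sqr_ge0.
have e1 : 1 - prob_UNN p n m = Ex p (fun E : {set 'I_n * 'I_m} => (~~ UNN (bip_adj E))%:R).
  have E1 := @Ex1 _ p ('I_n * 'I_m)%type.
  rewrite (@Ex_ext _ p _ (fun _ => 1) (fun E => (UNN (bip_adj E))%:R + (~~ UNN (bip_adj E))%:R)) in E1; last first.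
    by move=> E; case: (UNN _); rewrite /= ?addr0 ?add0r.
  rewrite Ex_add in E1.
  by apply/eqP; rewrite prob_UNN_Ex subr_eq addrC E1.
rewrite e1.
pose S1 (E : {set 'I_n * 'I_m}) : R := \sum_(u : 'I_n) \sum_(u' : 'I_n)
   ((u != u') && [forall k, ((u, k) \in E) == ((u', k) \in E)])%:R.
pose S2 (E : {set 'I_n * 'I_m}) : R := \sum_(k : 'I_m) \sum_(k' : 'I_m)
   ((k != k') && [forall i, ((i, k) \in E) == ((i, k') \in E)])%:R.
pose S3 (E : {set 'I_n * 'I_m}) : R := \sum_(u : 'I_n) ([forall k, (u, k) \notin E])%:R.
apply: le_trans (_ : Ex p (fun E => S1 E + S2 E + S3 E) <= _).
  apply: Ex_le => // E.
  case H: (UNN (bip_adj E)) => /=.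
    by apply: addr_ge0; [apply: addr_ge0|]; apply: sumr_ge0 => *; try apply: sumr_ge0 => *; exact: ler0n.
  have := notUNN_bad (negbT H).
  move=> /orP [h1|/orP [h2|h3]].
  - apply: le_trans (_ : S1 E <= _); last first.
      by rewrite -addrA lerDl; apply: addr_ge0; apply: sumr_ge0 => *; try apply: sumr_ge0 => *; exact: ler0n.
    have L := exists_le R (fun u : 'I_n => [exists u' : 'I_n, (u != u') && [forall k, ((u, k) \in E) == ((u', k) \in E)]]).
    rewrite /= h1 in L; apply: le_trans L _.
    by apply: ler_sum => u _; exact: exists_le.
  - apply: le_trans (_ : S2 E <= _); last first.
      rewrite -addrA [S2 E + _]addrC addrA lerDr.
      by apply: addr_ge0; apply: sumr_ge0 => *; try apply: sumr_ge0 => *; exact: ler0n.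
    have L := exists_le R (fun k : 'I_m => [exists k' : 'I_m, (k != k') && [forall i, ((i, k) \in E) == ((i, k') \in E)]]).
    rewrite /= h2 in L; apply: le_trans L _.
    by apply: ler_sum => k _; exact: exists_le.
  - apply: le_trans (_ : S3 E <= _); last first.
      rewrite lerDr.
      by apply: addr_ge0; apply: sumr_ge0 => *; try apply: sumr_ge0 => *; exact: ler0n.
    have L := exists_le R (fun u : 'I_n => [forall k, (u, k) \notin E]).
    by rewrite /= h3 in L.
rewrite !Ex_add; apply: lerD; first apply: lerD.
- rewrite /S1 Ex_sum; under eq_bigr do rewrite Ex_sum.
  apply: le_trans (_ : \sum_(u : 'I_n) \sum_(u' : 'I_n) q ^+ m <= _); last first.
    by rewrite !sumr_const !card_ord mulr_natl mulrnA.
  apply: ler_sum => u _; apply: ler_sum => u' _.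
  have [<-|uu] := eqVneq u u'.
    by rewrite /Ex big1 ?exprn_ge0 // => E _; rewrite ?eqxx mulr0.
  by rewrite /= (@row_Ex _ p 'I_n 'I_m u u' uu) card_ord.
- rewrite /S2 Ex_sum; under eq_bigr do rewrite Ex_sum.
  apply: le_trans (_ : \sum_(k : 'I_m) \sum_(k' : 'I_m) q ^+ n <= _); last first.
    by rewrite !sumr_const !card_ord mulr_natl mulrnA.
  apply: ler_sum => k _; apply: ler_sum => k' _.
  have [<-|kk] := eqVneq k k'.
    by rewrite /Ex big1 ?exprn_ge0 // => E _; rewrite ?eqxx mulr0.
  by rewrite /= (@col_Ex _ p 'I_n 'I_m k k' kk) card_ord.
- rewrite /S3 Ex_sum.
  under eq_bigr do rewrite iso_Ex card_ord.
  by rewrite sumr_const card_ord mulr_natl.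
Qed.
Lemma bin3_ge (s : nat) : (4 <= s)%N -> (s ^ 3 <= 48 * 'C(s, 3))%N.
Proof.
move=> hs.
have h6 : ('C(s, 3) * 6)%N = (s * (s.-1 * (s.-2)))%N.
  by rewrite -[6%N]/(3`!) bin_ffact !ffactnS ffactn0 muln1.
have : (s ^ 3 * 6 <= 48 * 'C(s, 3) * 6)%N.
  rewrite -mulnA h6. case: s hs {h6} => [|[|[|[|t]]]] //= _.
  nia.
by rewrite leq_pmul2r.
Qed.
Lemma geo_poly (R : realType) (r : R) : 0 <= r -> r < 1 ->
  forall d : R, 0 < d -> exists S : nat, forall s : nat, (S <= s)%N ->
  s%:R ^+ 2 * r ^+ s < d.
Proof.
move=> r0 r1 d d0.
have [->|rn0] := eqVneq r 0.
  exists 1%N => s hs; rewrite expr0n; case: s hs => // s _; by rewrite mulr0.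
have rp : 0 < r by rewrite lt0r rn0.
set h := r^-1 - 1.
have hp : 0 < h by rewrite subr_gt0 invf_gt1.
have hr : r * (h + 1) = 1 by rewrite /h subrK mulfV.
have h3 : 0 < h ^+ 3 by rewrite exprn_gt0.
exists (4 + Num.bound (48 / (h ^+ 3 * d)))%N => s hs.
have s4 : (4 <= s)%N by apply: leq_trans hs; rewrite leq_addr.
have sb : 48 / (h ^+ 3 * d) < s%:R.
  apply: lt_le_trans (archi_boundP _) _.
    by apply: divr_ge0 => //; apply: mulr_ge0; [apply: ltW|apply: ltW].
  by rewrite ler_nat; apply: leq_trans hs; rewrite leq_addl.
have key : 'C(s, 3)%:R * h ^+ 3 <= (h + 1) ^+ s.
  rewrite exprD1n.
  have i3 : (3 < s.+1)%N by rewrite ltnS (leq_trans _ s4).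
  rewrite (bigD1 (Ordinal i3)) //= mulrC mulr_natr.
  rewrite lerDl; apply: sumr_ge0 => i _; apply: mulrn_wge0; apply: exprn_ge0; exact: ltW.
have bn : s%:R ^+ 3 <= 48 * 'C(s, 3)%:R :> R.
  by rewrite -natrX -natrM ler_nat bin3_ge.
set X := s%:R ^+ 2 * r ^+ s.
have X0 : 0 <= X by apply: mulr_ge0; apply: exprn_ge0 => //; apply: ltW.
have spos : 0 < s%:R :> R by rewrite ltr0n (leq_trans _ s4).
have XH : X * (h + 1) ^+ s = s%:R ^+ 2 by rewrite /X -mulrA -exprMn hr expr1n mulr1.
have H : X * (s%:R * h ^+ 3) <= 48.
  have H1 : X * (s%:R ^+ 3 * h ^+ 3) <= 48 * s%:R ^+ 2.
    apply: le_trans (_ : X * (48 * 'C(s, 3)%:R * h ^+ 3) <= _).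
      apply: ler_wpM2l => //; apply: ler_wpM2r => //; exact: ltW.
    rewrite -mulrA mulrCA -XH; apply: ler_wpM2l => //; apply: ler_wpM2l => //.
  have s2 : 0 < s%:R ^+ 2 :> R by rewrite exprn_gt0.
  rewrite -(ler_pM2r s2).
  have -> : X * (s%:R * h ^+ 3) * s%:R ^+ 2 = X * (s%:R ^+ 3 * h ^+ 3) by ring.
  exact: H1.
have sb2 : 48 < s%:R * (h ^+ 3 * d).
  by rewrite -ltr_pdivrMr // mulr_gt0.
rewrite ltNge; apply/negP => dX.
have : s%:R * (h ^+ 3 * d) <= X * (s%:R * h ^+ 3).
  rewrite mulrA [X * _]mulrC; apply: ler_wpM2l => //.
  by apply: mulr_ge0; apply: ltW.
by move=> /(lt_le_trans sb2); rewrite ltNge H.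
Qed.

Lemma lerX (R : realType) (x y : R) (k : nat) : 0 <= x -> x <= y -> x ^+ k <= y ^+ k.
Proof.
move=> x0 xy; elim: k => [|k IH]; first by rewrite !expr0.
by rewrite !exprS; apply: ler_pM => //; apply: exprn_ge0.
Qed.

Theorem mainTheorem1 (R : realType) (p : R) (hp0 : 0 < p) (hp1 : p < 1)
    (a b : R) (ha : 0 < a) (hb : 0 < b) :
  forall eps : R, 0 < eps ->
  exists N : nat, forall n m : nat,
    (0 < n)%N -> (0 < m)%N -> (N <= n + m)%N ->
    n%:R <= a * m%:R -> m%:R <= b * n%:R ->
    1 - eps < prob_UNN p n m.
Proof.
move=> eps e0.
set r := 1 - p * (1 - p).
have pq : 0 < p * (1 - p) by rewrite mulr_gt0 // subr_gt0.
have r0 : 0 <= r by rewrite /r subr_ge0; nra.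
have r1 : r < 1 by rewrite /r ltrBlDr ltrDl.
set q := p ^+ 2 + (1 - p) ^+ 2.
have q0 : 0 <= q by rewrite /q addr_ge0 // sqr_ge0.
have qr : q <= r by rewrite /q /r; nra.
have p'0 : 0 <= 1 - p by rewrite subr_ge0 ltW.
have pr : 1 - p <= r by rewrite /r; nra.
set C := a ^+ 2 + a + b ^+ 2.
have C0 : 0 <= C by rewrite /C !addr_ge0 ?sqr_ge0 ?ltW.
set d := eps / (C + 1).
have d0 : 0 < d by rewrite /d divr_gt0 // ltr_wpDl.
have Cd : C * d < eps.
  rewrite /d mulrA ltr_pdivrMr ?ltr_wpDl //; nra.
have [S HS] := geo_poly r0 r1 d0.
exists (Num.bound ((a + b + 1) * S%:R)) => n m n0 m0 hN hna hmb.
have hNr : (a + b + 1) * S%:R < n%:R + m%:R.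
  rewrite -natrD; apply: lt_le_trans (archi_boundP _) _.
    by rewrite mulr_ge0 // !addr_ge0 ?ltW.
  by rewrite ler_nat.
have Sr : 0 <= S%:R :> R by exact: ler0n.
have bS : 0 <= b * S%:R by rewrite mulr_ge0 // ltW.
have aS : 0 <= a * S%:R by rewrite mulr_ge0 // ltW.
have mS : (S <= m)%N.
  have : (a + 1) * S%:R < (a + 1) * m%:R by nra.
  by rewrite ltr_pM2l ?ltr_wpDl ?ltW // ltr_nat => /ltnW.
have nS : (S <= n)%N.
  have : (b + 1) * S%:R < (b + 1) * n%:R by nra.
  by rewrite ltr_pM2l ?ltr_wpDl ?ltW // ltr_nat => /ltnW.
have fm := HS m mS.
have fn := HS n nS.
set fM := m%:R ^+ 2 * r ^+ m in fm.
set fN := n%:R ^+ 2 * r ^+ n in fn.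
have fM0 : 0 <= fM by rewrite /fM mulr_ge0 ?exprn_ge0.
have fN0 : 0 <= fN by rewrite /fN mulr_ge0 ?exprn_ge0.
have nn0 : 0 <= n%:R :> R by exact: ler0n.
have mm0 : 0 <= m%:R :> R by exact: ler0n.
have t1 : (n * n)%:R * q ^+ m <= a ^+ 2 * fM.
  rewrite /fM mulrA natrM; apply: ler_pM; rewrite ?mulr_ge0 ?exprn_ge0 //.
    by rewrite -exprMn expr2; apply: ler_pM.
  exact: lerX.
have t2 : (m * m)%:R * q ^+ n <= b ^+ 2 * fN.
  rewrite /fN mulrA natrM; apply: ler_pM; rewrite ?mulr_ge0 ?exprn_ge0 //.
    by rewrite -exprMn expr2; apply: ler_pM.
  exact: lerX.
have t3 : n%:R * (1 - p) ^+ m <= a * fM.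
  rewrite /fM mulrA; apply: ler_pM; rewrite ?mulr_ge0 ?exprn_ge0 //; last exact: lerX.
  apply: le_trans hna _; apply: ler_wpM2l; first exact: ltW.
  rewrite expr2 -[X in X <= _]mul1r; apply: ler_wpM2r => //.
  by rewrite ler1n.
have B := @bad_bound _ p n m (ltW hp0) (ltW hp1).
rewrite -/q in B.
have : 1 - prob_UNN p n m < eps.
  apply: le_lt_trans B _; apply: le_lt_trans Cd.
  rewrite /C !mulrDl; nra.
by rewrite ltrBlDr -ltrBlDl.
Qed.
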